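(* Let $\mathcal C$ be a Clifford circuit with $m$ measurements and let $\mathcal C'$ be the circuit obtained from $\mathcal C$ by replacing the measured operator $S_j$ by $-S_j$ for every $j$ such that, when the Outcome-Code Algorithm is run on $\mathcal C$, the measurement of $S_j$ falls in case (a) with $-S_j\in\langle\mathcal S\rangle$ (i.e. $\epsilon=-1$). Then the outcome code $\mathcal O(\mathcal C')$ of $\mathcal C'$ is a linear subspace of $\mathbb Z_2^m$.
   Context: A Clifford circuit $\mathcal C$ on $n$ qubits is a finite sequence $(C_1,\dots,C_s)$ of operations, each either a unitary Clifford gate or the measurement of a Hermitian $n$-qubit Pauli operator. Each $C_i$ has a level in $\{1,2,\dots\}$; operations of equal level have disjoint supports and levels are nondecreasing along the sequence. The circuit has $m$ measurements; in circuit order the $j$-th measures $S_j$. An execution produces $o\in\mathbb Z_2^m$ with $o_j=0$ for eigenvalue $+1$ and $o_j=1$ for eigenvalue $-1$. The outcome code $\mathcal O(\mathcal C)$ is the set of outcome bit-strings occurring with nonzero probability for some input state. Outcome-Code Algorithm. Maintain a list $\mathcal S$ of pairs $(T,K_T)$ ($T$ a signed Hermitian $n$-qubit Pauli, $K_T\subseteq\{1,\dots,m\}$), initially empty. Process $C_1,\dots,C_s$ in order. If $C_i$ is a unitary $U$, replace each $T$ by $UTU^{-1}$. If $C_i$ measures $S_j$: (a) if $S_j$ or $-S_j$ lies in the group $\langle\mathcal S\rangle$ generated by the $T$'s, write $\epsilon S_j=\prod_{T\in\mathcal T}T$ with $\epsilon\in\{\pm1\}$, let $K_j$ be the symmetric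 difference of the $K_T$, $T\in\mathcal T$, and record the affine check $o_j+\sum_{k\in K_j}o_k=0$ if $\epsilon=+1$, $=1$ if $\epsilon=-1$; (b) otherwise, if some $T\in\mathcal S$ anticommutes with $S_j$, replace every other anticommuting $T'$ by $(TT',K_T\triangle K_{T'})$ and remove $(T,K_T)$; then add $(S_j,\{j\})$. *)

(* Defs.v *)
(* Complex numbers are modelled by algC (algebraic complex
   numbers), which contains all matrix entries of Pauli and Clifford operators
   and of the relevant states. *)
From HB Require Import structures.
From mathcomp Require Import all_boot all_order all_algebra algC.
From Stdlib Require Import ClassicalEpsilon.
Set Implicit Arguments.
Unset Strict Implicit.
Unset Printing Implicit Defensive.
Import Order.TTheory GRing.Theory Num.Theory.
Local Open Scope ring_scope.

Definition decP (P : Prop) : bool :=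
  if excluded_middle_informative P then true else false.

(* computational basis index i : 'I_(2^n); qubit k carries bit k of i *)
Definition opn (n : nat) := 'M[algC]_(2 ^ n).
Definition bitk (k i : nat) : bool := odd (i %/ 2 ^ k).

Inductive pauli1 := PI | PX | PY | PZ.

Definition sigma (p : pauli1) (a b : bool) : algC :=
  match p with
  | PI => if a == b then 1 else 0
  | PX => if a == b then 0 else 1
  | PY => if a == b then 0 else if a then 'i else - 'i
  | PZ => if a == b then (if a then -1 else 1) else 0
  end.

Definition tensP (n : nat) (p : 'I_n -> pauli1) : opn n :=
  \matrix_(i, j) \prod_(k < n) sigma (p k) (bitk k i) (bitk k j).

Definition adj (n : nat) (M : opn n) : opn n := (map_mx Num.conj M)^T.

Definition is_pauli (n : nat) (M : opn n) : Prop :=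
  exists (k : 'I_4) (p : 'I_n -> pauli1), M = ('i ^+ k) *: tensP p.

Definition hermitian (n : nat) (M : opn n) : Prop := adj M = M.

Definition is_hpauli (n : nat) (M : opn n) : Prop := is_pauli M /\ hermitian M.

Definition unitary (n : nat) (U : opn n) : Prop := U *m adj U = 1%:M.

Definition clifford (n : nat) (U : opn n) : Prop :=
  unitary U /\ forall P : opn n, is_pauli P -> is_pauli (U *m P *m invmx U).

Inductive cop (n : nat) :=
| Gate of opn n
| Meas of opn n.
Arguments Gate {n}.
Arguments Meas {n}.

Definition circuit (n : nat) := seq (cop n).

Definition valid_op (n : nat) (c : cop n) : Prop :=
  match c with Gate U => clifford U | Meas Sm => is_hpauli Sm end.

Definition valid_circuit (n : nat) (C : circuit n) : Prop :=
  foldr (fun c P => valid_op c /\ P) True C.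

Definition is_meas (n : nat) (c : cop n) : bool :=
  if c is Meas _ then true else false.

Definition num_meas (n : nat) (C : circuit n) : nat := count (@is_meas n) C.

Definition proj (n : nat) (b : bool) (Sm : opn n) : opn n :=
  (2%:R)^-1 *: (1%:M + (if b then - Sm else Sm)).

(* Unnormalised post-measurement state (Born rule): the circuit is run on psi,
   the j-th measurement (0-based counter j) yielding outcome o j. *)
Fixpoint run (n : nat) (C : circuit n) (j : nat) (o : nat -> bool)
    (psi : 'cV[algC]_(2 ^ n)) : 'cV[algC]_(2 ^ n) :=
  match C with
  | [::] => psi
  | Gate U :: C' => run C' j o (U *m psi)
  | Meas Sm :: C' => run C' j.+1 o (proj (o j) Sm *m psi)
  end.

Definition sqnorm (N : nat) (v : 'cV[algC]_N) : algC := \sum_i `|v i 0| ^+ 2.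

(* probability of the outcome string o (o j = true means eigenvalue -1) *)
Definition prob (n : nat) (C : circuit n) (o : nat -> bool)
    (psi : 'cV[algC]_(2 ^ n)) : algC := sqnorm (run C 0 o psi).

Definition outcome_fun (m : nat) (o : 'rV['F_2]_m) (j : nat) : bool :=
  match ltnP j m with
  | LtnNotGeq h => o 0 (Ordinal h) == 1
  | _ => false
  end.

Definition outcome_code (n : nat) (C : circuit n) : pred 'rV['F_2]_(num_meas C) :=
  fun o => decP (exists psi : 'cV[algC]_(2 ^ n),
                   sqnorm psi = 1 /\ prob C (outcome_fun o) psi != 0).

Arguments outcome_code {n} C _.

Definition in_group (n : nat) (L : seq (opn n)) (X : opn n) : Prop :=
  exists s : seq (opn n), all (mem L) s /\ X = foldr (@mulmx _ _ _ _) 1%:M s.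

Definition anticomm (n : nat) (A B : opn n) : bool := A *m B == - (B *m A).

Definition update_b (n : nat) (L : seq (opn n)) (Sm : opn n) : seq (opn n) :=
  let i := find (fun T => anticomm T Sm) L in
  if (i < size L)%N then
    let T := nth 0 L i in
    [seq (if anticomm T' Sm then T *m T' else T') | T' <- take i L ++ drop i.+1 L]
      ++ [:: Sm]
  else rcons L Sm.

(* returns, for each measurement in order, whether it falls in case (a)
   with epsilon = -1, i.e. -S_j in <S> *)
Fixpoint oca_flags (n : nat) (L : seq (opn n)) (C : circuit n) : seq bool :=
  match C with
  | [::] => [::]
  | Gate U :: C' => oca_flags [seq U *m T *m invmx U | T <- L] C'
  | Meas Sm :: C' =>
      if decP (in_group L Sm \/ in_group L (- Sm)) then
        decP (in_group L (- Sm)) :: oca_flags L C'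
      else false :: oca_flags (update_b L Sm) C'
  end.

Fixpoint flip_meas (n : nat) (fl : seq bool) (C : circuit n) : circuit n :=
  match C with
  | [::] => [::]
  | Gate U :: C' => Gate U :: flip_meas fl C'
  | Meas Sm :: C' =>
      Meas (if head false fl then - Sm else Sm) :: flip_meas (behead fl) C'
  end.

Definition flipped_circuit (n : nat) (C : circuit n) : circuit n :=
  flip_meas (oca_flags [::] C) C.

(* Main.v *)
Require Import Defs.
From HB Require Import structures.
From mathcomp Require Import all_boot all_order all_algebra algC.
From Stdlib Require Import FunctionalExtensionality Classical.
From Stdlib Require ClassicalEpsilon.
Set Implicit Arguments.
Unset Strict Implicit.
Unset Printing Implicit Defensive.
Import Order.TTheory GRing.Theory Num.Theory.
Local Open Scope ring_scope.


Definition mult1 (a b : pauli1) : pauli1 :=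
  match a, b with
  | PI, x => x | x, PI => x
  | PX, PX | PY, PY | PZ, PZ => PI
  | PX, PY => PZ | PY, PX => PZ
  | PY, PZ => PX | PZ, PY => PX
  | PZ, PX => PY | PX, PZ => PY end.

Definition phk (a b : pauli1) : nat :=
  match a, b with
  | PX, PY | PY, PZ | PZ, PX => 1
  | PY, PX | PZ, PY | PX, PZ => 3
  | _, _ => 0 end.

Lemma i3 : ('i : algC) ^+ 3 = - 'i.
Proof. by rewrite exprS (@sqrCi algC) mulrN1. Qed.

Lemma sigma_mul a b x y :
  \sum_(c : bool) sigma a x c * sigma b c y = 'i ^+ phk a b * sigma (mult1 a b) x y.
Proof.
rewrite big_bool.
case: a; case: b; case: x; case: y;
  rewrite /= ?i3 ?expr1 ?expr0 ?(mul0r, mulr0, mul1r, mulr1, add0r, addr0, mulrN, mulNr, opprK, mulN1r, mulrN1) //;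
  rewrite -?expr2 ?(@sqrCi algC) ?opprK //.
Qed.

Lemma mult1C a b : mult1 b a = mult1 a b.
Proof. by case: a; case: b. Qed.

Definition anti1 (a b : pauli1) : bool :=
  match a, b with
  | PI, _ | _, PI | PX, PX | PY, PY | PZ, PZ => false
  | _, _ => true end.

Definition sgb (b : bool) : algC := if b then -1 else 1.

Lemma phkC a b : ('i : algC) ^+ phk b a = sgb (anti1 a b) * 'i ^+ phk a b.
Proof. by case: a; case: b; rewrite /= ?i3 ?expr1 ?expr0 ?mul1r ?mulN1r ?opprK. Qed.

Lemma bitk0 m : bitk 0 m = odd m.
Proof. by rewrite /bitk expn0 divn1. Qed.

Lemma bitkS k m : bitk k.+1 m = bitk k m./2.
Proof. by rewrite /bitk expnS divnMA divn2. Qed.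

Lemma sum_double (f : nat -> algC) N :
  \sum_(0 <= l < N.*2) f l = \sum_(0 <= l < N) (f l.*2 + f l.*2.+1).
Proof.
elim: N => [|N IH]; first by rewrite !big_geq.
by rewrite doubleS !big_nat_recr //= IH addrA.
Qed.

Lemma bitsum n (F : 'I_n -> bool -> algC) :
  \sum_(l < 2 ^ n) \prod_(k < n) F k (bitk k l) = \prod_(k < n) (F k false + F k true).
Proof.
elim: n F => [|n IH] F.
  by rewrite big_ord1 !big_ord0.
rewrite big_ord_recl -(IH (fun k => F (lift ord0 k))) mulr_sumr.
rewrite -(big_mkord xpredT (fun l => \prod_(k < n.+1) F k (bitk k l))).
rewrite -(big_mkord xpredT (fun l => (F ord0 false + F ord0 true) * \prod_(k < n) F (lift ord0 k) (bitk k l))).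
rewrite expnS mul2n sum_double; apply: eq_bigr => l _.
rewrite !big_ord_recl !bitk0 odd_double /= odd_double /= mulrDl.
congr (_ * _ + _ * _); apply: eq_bigr => k _; rewrite bitkS.
  by rewrite doubleK.
by rewrite -[l.*2.+1]/(true + l.*2)%N half_bit_double.
Qed.

Definition tens_mul (n : nat) (p q : 'I_n -> pauli1) : 'I_n -> pauli1 :=
  fun k => mult1 (p k) (q k).

Lemma tensP_mul n (p q : 'I_n -> pauli1) :
  tensP p *m tensP q = (\prod_(k < n) 'i ^+ phk (p k) (q k)) *: tensP (tens_mul p q).
Proof.
apply/matrixP => i j; rewrite !mxE.
under eq_bigr => l _ do rewrite !mxE -big_split /=.
rewrite (bitsum (fun k c => sigma (p k) (bitk k i) c * sigma (q k) c (bitk k j))).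
rewrite -big_split /=; apply: eq_bigr => k _.
rewrite -sigma_mul big_bool addrC.
by rewrite /tens_mul.
Qed.


Lemma cni : Num.conj (- 'i : algC) = 'i.
Proof. by rewrite -conjCi conjCK. Qed.
Lemma ci : Num.conj ('i : algC) = - 'i.
Proof. by rewrite conjCi. Qed.
Lemma conj_sigma a x y : Num.conj (sigma a x y) = sigma a y x.
Proof.
case: a; case: x; case: y; rewrite /= ?cni ?ci ?rmorph1 ?rmorph0 ?rmorphN ?rmorph1 //.
Qed.

Lemma tensP_adj n (p : 'I_n -> pauli1) : adj (tensP p) = tensP p.
Proof.
apply/matrixP => i j; rewrite /adj !mxE rmorph_prod; apply: eq_bigr => k _.
exact: conj_sigma.
Qed.

Lemma bits_inj n (i j : nat) : (i < 2 ^ n)%N -> (j < 2 ^ n)%N ->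
  (forall k, (k < n)%N -> bitk k i = bitk k j) -> i = j.
Proof.
elim: n i j => [|n IH] i j.
  by rewrite expn0 !ltnS !leqn0 => /eqP -> /eqP ->.
rewrite expnS mul2n => hi hj hb.
rewrite -(odd_double_half i) -(odd_double_half j).
have h0 := hb 0%N isT; rewrite !bitk0 in h0; rewrite h0.
congr (_ + _.*2)%N; apply: IH.
- by rewrite ltn_half_double.
- by rewrite ltn_half_double.
- by move=> k hk; rewrite -!bitkS; apply: hb.
Qed.

Lemma tensP_I n : tensP (fun _ : 'I_n => PI) = 1%:M.
Proof.
apply/matrixP => i j; rewrite !mxE /=.
case: (i =P j) => [->|hij].
  by apply: big1 => k _; rewrite eqxx.
case: (boolP [exists k : 'I_n, bitk k i != bitk k j]) => [/existsP [k hk]|hne].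
  by rewrite (bigD1 k) //= (negbTE hk) mul0r.
exfalso; apply: hij; apply: val_inj; apply: (@bits_inj n) => //=.
move=> k hk; apply/eqP; move/existsPn: hne => /(_ (Ordinal hk)).
by rewrite negbK.
Qed.

Lemma mult1_self a : mult1 a a = PI.
Proof. by case: a. Qed.

Lemma phk_self a : phk a a = 0%N.
Proof. by case: a. Qed.

Lemma tensP_sq n (p : 'I_n -> pauli1) : tensP p *m tensP p = 1%:M.
Proof.
rewrite tensP_mul big1 ?scale1r; last by move=> k _; rewrite phk_self.
rewrite -(tensP_I n); congr tensP; apply: functional_extensionality => k.
by rewrite /tens_mul mult1_self.
Qed.


Lemma adj_M n (A B : opn n) : adj (A *m B) = adj B *m adj A.
Proof. by rewrite /adj map_mxM trmx_mul. Qed.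

Lemma adj_Z n (c : algC) (A : opn n) : adj (c *: A) = c^* *: adj A.
Proof. by apply/matrixP => i j; rewrite /adj !mxE rmorphM. Qed.

Lemma adj_D n (A B : opn n) : adj (A + B) = adj A + adj B.
Proof. by apply/matrixP => i j; rewrite /adj !mxE rmorphD. Qed.

Lemma adj_N n (A : opn n) : adj (- A) = - adj A.
Proof. by apply/matrixP => i j; rewrite /adj !mxE rmorphN. Qed.

Lemma adj_1 n : adj (1%:M : opn n) = 1%:M.
Proof. by rewrite /adj map_scalar_mx rmorph1 tr_scalar_mx. Qed.

Lemma adj_0 n : adj (0 : opn n) = 0.
Proof. by apply/matrixP => i j; rewrite /adj !mxE rmorph0. Qed.

Lemma adj_K n (A : opn n) : adj (adj A) = A.
Proof. by apply/matrixP => i j; rewrite /adj !mxE conjCK. Qed.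

Lemma idx0 n : (0 < 2 ^ n)%N.
Proof. by rewrite expn_gt0. Qed.

Lemma one_neq0 n : (1%:M : opn n) != 0.
Proof.
apply/eqP => /matrixP /(_ (Ordinal (idx0 n)) (Ordinal (idx0 n))).
by rewrite !mxE eqxx => /eqP; rewrite oner_eq0.
Qed.

Lemma i4 : ('i : algC) ^+ 4 = 1.
Proof. by rewrite (_ : 4%N = 2 * 2)%N // exprM (@sqrCi algC) expr2 mulrNN mulr1. Qed.

Lemma pauliE n (M : opn n) : is_pauli M <-> exists (k : nat) (p : 'I_n -> pauli1), M = 'i ^+ k *: tensP p.
Proof.
split; first by case=> k [p ->]; exists k, p.
case=> k [p ->]; exists (Ordinal (ltn_pmod k (isT : (0 < 4)%N))), p.
by rewrite /= expr_mod // i4.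
Qed.

Lemma pauli_mul n (M N : opn n) : is_pauli M -> is_pauli N -> is_pauli (M *m N).
Proof.
case=> a [p ->] [b [q ->]]; apply/pauliE.
rewrite -scalemxAl -scalemxAr tensP_mul !scalerA prodrXr -!exprD.
by eexists; eexists.
Qed.

Lemma tens_mulC n (p q : 'I_n -> pauli1) : tens_mul q p = tens_mul p q.
Proof. by apply: functional_extensionality => k; rewrite /tens_mul mult1C. Qed.

Lemma pauli_comm n (M N : opn n) : is_pauli M -> is_pauli N ->
  M *m N = N *m M \/ M *m N = - (N *m M).
Proof.
case=> a [p ->] [b [q ->]].
rewrite -!scalemxAl -!scalemxAr !tensP_mul !scalerA tens_mulC.
have -> : \prod_(k < n) 'i ^+ phk (q k) (p k) =
    (\prod_(k < n) sgb (anti1 (p k) (q k))) * \prod_(k < n) 'i ^+ phk (p k) (q k).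
  by rewrite -big_split /=; apply: eq_bigr => k _; rewrite phkC.
have : (\prod_(k < n) sgb (anti1 (p k) (q k))) = 1 \/ (\prod_(k < n) sgb (anti1 (p k) (q k))) = -1.
  apply: (big_ind (fun x : algC => x = 1 \/ x = -1)); first by left.
    by move=> x y [->|->] [->|->]; rewrite ?mulr1 ?mul1r ?mulrNN ?mulr1; auto.
  by move=> k _; rewrite /sgb; case: anti1; auto.
case=> ->; [left|right]; first by rewrite mul1r [_ ^+ b * _]mulrC.
by rewrite mulN1r mulrN scaleNr opprK [_ ^+ b * _]mulrC.
Qed.

Lemma pauli_unitary n (M : opn n) : is_pauli M -> M *m adj M = 1%:M.
Proof.
case=> a [p ->]; rewrite adj_Z tensP_adj -scalemxAl -scalemxAr tensP_sq scalerA.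
by rewrite -normCK normrX normCi expr1n expr1n scale1r.
Qed.

Lemma pauli_neq0 n (M : opn n) : is_pauli M -> M != 0.
Proof.
move=> hM; apply/eqP => h0; move: (pauli_unitary hM); rewrite h0 mul0mx => /esym/eqP.
by rewrite (negbTE (one_neq0 n)).
Qed.

Lemma hpauli_sq n (M : opn n) : is_pauli M -> adj M = M -> M *m M = 1%:M.
Proof. by move=> hM hA; rewrite -{2}hA pauli_unitary. Qed.

Lemma tr_tensP n (p : 'I_n -> pauli1) :
  \tr (tensP p) = \prod_(k < n) (sigma (p k) false false + sigma (p k) true true).
Proof.
rewrite /mxtrace; under eq_bigr => l _ do rewrite mxE.
exact: (bitsum (fun k c => sigma (p k) c c)).
Qed.

Definition isI (a : pauli1) : bool := if a is PI then true else false.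

Lemma pauli_tr n (Q : opn n) : is_pauli Q -> \tr Q != 0 -> exists c, Q = c *: 1%:M.
Proof.
case=> a [p ->]; rewrite mxtraceZ tr_tensP.
case: (boolP [exists k, ~~ isI (p k)]) => [/existsP [k hk]|hall].
  rewrite (bigD1 k) //=; move: hk; case: (p k) => //= _; 
  by rewrite ?addrN ?addr0 ?add0r ?mul0r ?mulr0 eqxx.
move=> _; exists ('i ^+ a); congr (_ *: _); rewrite -(tensP_I n); congr tensP.
apply: functional_extensionality => k; move/existsPn: hall => /(_ k).
by rewrite negbK; case: (p k).
Qed.

Definition p4 (x : 'I_4) : pauli1 :=
  match val x with 0 => PI | 1 => PX | 2 => PY | _ => PZ end%N.
Definition c4 (a : pauli1) : 'I_4 :=
  match a with
  | PI => @Ordinal 4 0 isT | PX => @Ordinal 4 1 isT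
  | PY => @Ordinal 4 2 isT | PZ => @Ordinal 4 3 isT end.
Lemma c4K : cancel c4 p4. Proof. by case. Qed.

Definition pauli_seq n : seq (opn n) :=
  map (fun x : 'I_4 * {ffun 'I_n -> 'I_4} => 'i ^+ (val x.1) *: tensP (fun k => p4 (x.2 k)))
    (enum {: 'I_4 * {ffun 'I_n -> 'I_4}}).

Lemma pauli_seqP n (M : opn n) : is_pauli M <-> M \in pauli_seq n.
Proof.
split.
  case=> k [p ->]; apply/mapP; exists (k, [ffun i => c4 (p i)]); first by rewrite mem_enum.
  by congr (_ *: tensP _); apply: functional_extensionality => i; rewrite /= ffunE c4K.
by case/mapP => x _ ->; exists x.1, (fun k => p4 (x.2 k)).
Qed.

Lemma unitary_unit n (U : opn n) : unitary U -> U \in unitmx.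
Proof. by move=> hU; case: (mulmx1_unit hU). Qed.

Lemma unitary_inv n (U : opn n) : unitary U -> invmx U = adj U.
Proof.
move=> hU; have hu := unitary_unit hU.
by rewrite -[invmx U]mulmx1 -hU mulmxA mulVmx // mul1mx.
Qed.

Lemma clifford_inv n (U Q : opn n) : clifford U -> is_pauli Q -> is_pauli (invmx U *m Q *m U).
Proof.
case=> hU hC hQ; have hu := unitary_unit hU.
pose phi := fun M : opn n => U *m M *m invmx U.
have phi_inj : injective phi.
  move=> M N; rewrite /phi => /(congr1 (mulmx^~ U)); rewrite !mulmxKV //.
  by move/(congr1 (mulmx (invmx U))); rewrite !mulKmx.
pose s0 := undup (pauli_seq n).
have hs1 : uniq (map phi s0) by rewrite (map_inj_uniq phi_inj) undup_uniq.
have hsub : {subset map phi s0 <= s0}.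
  move=> x /mapP [y]; rewrite mem_undup => /pauli_seqP hy ->.
  by rewrite mem_undup; apply/pauli_seqP; apply: hC.
have [_ heq] := uniq_min_size hs1 hsub (eq_leq (esym (size_map phi s0))).
have : Q \in map phi s0 by rewrite heq mem_undup; apply/pauli_seqP.
case/mapP => P; rewrite mem_undup => /pauli_seqP hP ->.
by rewrite /phi mulmxA mulKmx // mulmxKV.
Qed.


Lemma foldr_mulmx_cat n (s t : seq (opn n)) :
  foldr (@mulmx _ _ _ _) 1%:M (s ++ t) =
  foldr (@mulmx _ _ _ _) 1%:M s *m foldr (@mulmx _ _ _ _) 1%:M t.
Proof. by elim: s => [|x s IH] /=; rewrite ?mul1mx // IH mulmxA. Qed.

Lemma ig1 n (L : seq (opn n)) : in_group L 1%:M.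
Proof. by exists [::]. Qed.

Lemma igM n (L : seq (opn n)) g h : in_group L g -> in_group L h -> in_group L (g *m h).
Proof.
case=> s [hs ->] [t [ht ->]]; exists (s ++ t).
by rewrite all_cat hs ht foldr_mulmx_cat.
Qed.

Lemma igT n (L : seq (opn n)) T : T \in L -> in_group L T.
Proof. by move=> hT; exists [:: T]; rewrite /= hT mulmx1. Qed.

Lemma ig_sub n (L L' : seq (opn n)) g : {subset L <= L'} -> in_group L g -> in_group L' g.
Proof.
move=> hsub [s [hs ->]]; exists s; split => //.
by apply/allP => x /(allP hs) /hsub.
Qed.

Lemma ig_ind n (L : seq (opn n)) (P : opn n -> Prop) :
  P 1%:M -> (forall x h, x \in L -> in_group L h -> P h -> P (x *m h)) ->
  forall g, in_group L g -> P g.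
Proof.
move=> h1 hs g [s [hall ->]]; elim: s hall => [|x s IH] //= /andP [hx hall].
apply: (hs _ _ hx _ (IH hall)); by exists s.
Qed.

Definition LP n (L : seq (opn n)) : Prop :=
  (forall T, T \in L -> is_pauli T /\ adj T = T /\ T *m T = 1%:M) /\
  (forall T T', T \in L -> T' \in L -> T *m T' = T' *m T).

Lemma ig_comm n (L : seq (opn n)) g T : LP L -> T \in L -> in_group L g -> g *m T = T *m g.
Proof.
move=> [_ hc] hT; move: g; apply: (@ig_ind n L (fun g => g *m T = T *m g)); first by rewrite mul1mx mulmx1.
by move=> x h hx _ IH; rewrite -mulmxA IH !mulmxA (hc _ _ hx hT).
Qed.

Lemma ig_sq n (L : seq (opn n)) g : LP L -> in_group L g -> g *m g = 1%:M.
Proof.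
move=> hL; move: g; apply: (@ig_ind n L (fun g => g *m g = 1%:M)); first by rewrite mul1mx.
move=> x h hx hh IH.
by rewrite mulmxA -[x *m h *m x]mulmxA (ig_comm hL hx hh) !mulmxA (proj2 (proj2 (proj1 hL x hx))) mul1mx IH.
Qed.

Lemma ig_herm n (L : seq (opn n)) g : LP L -> in_group L g -> adj g = g.
Proof.
move=> hL; move: g; apply: (@ig_ind n L (fun g => adj g = g)); first exact: adj_1.
move=> x h hx hh IH.
by rewrite adj_M IH (proj1 (proj2 (proj1 hL x hx))) (ig_comm hL hx hh).
Qed.

Lemma ig_pauli n (L : seq (opn n)) g : LP L -> in_group L g -> is_pauli g.
Proof.
move=> hL; move: g; apply: (@ig_ind n L (@is_pauli n)).
  by exists (@Ordinal 4 0 isT), (fun _ => PI); rewrite tensP_I expr0 scale1r.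
by move=> x h hx _ IH; apply: pauli_mul => //; case: (proj1 hL x hx).
Qed.

Lemma ig_conj n (L : seq (opn n)) (U : opn n) g : U \in unitmx ->
  in_group L g -> in_group [seq U *m T *m invmx U | T <- L] (U *m g *m invmx U).
Proof.
move=> hU; move: g; apply: (@ig_ind n L (fun g => in_group [seq U *m T *m invmx U | T <- L] (U *m g *m invmx U))).
  by rewrite mulmx1 mulmxV //; exact: ig1.
move=> x h hx _ IH.
have -> : U *m (x *m h) *m invmx U = (U *m x *m invmx U) *m (U *m h *m invmx U).
  by rewrite !mulmxA mulmxKV // -!mulmxA.
by apply: igM => //; apply: igT; apply: map_f.
Qed.


Definition XA n (A : opn n) : opn n := A *m adj A.

Lemma sgb_sq b : sgb b * sgb b = 1.
Proof. by case: b; rewrite /= ?mulrNN mulr1. Qed.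

Lemma sgb_conj b : (sgb b)^* = sgb b.
Proof. by case: b; rewrite /= ?rmorphN rmorph1. Qed.

Lemma sgb_add a b : sgb (a (+) b) = sgb a * sgb b.
Proof. by case: a; case: b; rewrite /= ?mulrNN ?mulr1 ?mul1r ?mulrN ?mulNr. Qed.

Lemma sgb_neg b : sgb (~~ b) = - sgb b.
Proof. by case: b; rewrite /= ?opprK. Qed.

Lemma half2 : (2^-1 : algC) + 2^-1 = 1.
Proof.
have h : (2 : algC) != 0 by rewrite pnatr_eq0.
have e : (2 : algC) = 1 + 1 by [].
by rewrite -{1 2}(mul1r (2^-1)) -mulrDl -e divff.
Qed.

Lemma conj_half : (2^-1 : algC)^* = 2^-1.
Proof. by rewrite fmorphV rmorph_nat. Qed.

Lemma projE n b (S : opn n) : proj b S = 2^-1 *: (1%:M + sgb b *: S).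
Proof. by case: b; rewrite /proj /sgb ?scaleN1r ?scale1r. Qed.

Lemma proj_adj n b (S : opn n) : adj S = S -> adj (proj b S) = proj b S.
Proof. by move=> hS; rewrite projE adj_Z adj_D adj_Z adj_1 hS sgb_conj conj_half. Qed.

Lemma S_proj n b (S : opn n) : S *m S = 1%:M -> S *m proj b S = sgb b *: proj b S.
Proof.
move=> hS; rewrite projE -scalemxAr mulmxDr mulmx1 -scalemxAr hS.
rewrite scalerA mulrC -scalerA; congr (_ *: _).
by rewrite scalerDr scalerA sgb_sq scale1r scalemx1 addrC.
Qed.

Lemma proj_S n b (S : opn n) : proj b S *m S = S *m proj b S.
Proof.
by rewrite projE -scalemxAl -scalemxAr mulmxDr mulmxDl mul1mx mulmx1 -scalemxAl -scalemxAr.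
Qed.



Lemma scale_half_double n (A : opn n) : 2^-1 *: (A + A) = A.
Proof. by rewrite scalerDr -scalerDl half2 scale1r. Qed.

Lemma proj_idem n b (S : opn n) : S *m S = 1%:M -> proj b S *m proj b S = proj b S.
Proof.
move=> hS; rewrite {2}projE -scalemxAr mulmxDr mulmx1 -scalemxAr proj_S S_proj //.
by rewrite scalerA sgb_sq scale1r scale_half_double.
Qed.

Lemma proj_comm n b (S Q : opn n) : Q *m S = S *m Q -> Q *m proj b S = proj b S *m Q.
Proof.
move=> h; rewrite projE -scalemxAl -scalemxAr mulmxDr mulmxDl mul1mx mulmx1.
by rewrite -scalemxAl -scalemxAr h.
Qed.

Lemma proj_anti n b (S Q : opn n) : Q *m S = - (S *m Q) ->
  proj b S *m Q = Q *m proj (~~ b) S.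
Proof.
move=> h; rewrite !projE -scalemxAl -scalemxAr mulmxDr mulmxDl mul1mx mulmx1.
by rewrite -scalemxAl -scalemxAr h sgb_neg scalerN scaleNr opprK.
Qed.

Lemma proj_orth n b (S : opn n) : S *m S = 1%:M -> proj (~~ b) S *m proj b S = 0.
Proof.
move=> hS; rewrite [X in _ *m X]projE -scalemxAr mulmxDr mulmx1 -scalemxAr proj_S S_proj //.
by rewrite scalerA sgb_neg mulrN sgb_sq scaleN1r subrr scaler0.
Qed.

Lemma tr_proj n b (S Y : opn n) :
  \tr (proj b S *m Y) = 2^-1 * (\tr Y + sgb b * \tr (S *m Y)).
Proof.
by rewrite projE -scalemxAl mxtraceZ mulmxDl mul1mx mxtraceD -scalemxAl mxtraceZ.
Qed.

Definition linf (f : (nat -> bool) -> bool) : Prop :=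
  forall o o', f (fun j => o j (+) o' j) = f o (+) f o'.

Definition linG (G : (nat -> bool) -> Prop) : Prop :=
  G (fun _ => false) /\ forall o o', G o -> G o' -> G (fun j => o j (+) o' j).

Lemma ig_sign n (L : seq (opn n)) (G : (nat -> bool) -> Prop) (Y : (nat -> bool) -> opn n) :
  (forall T, T \in L -> exists f, linf f /\ forall o, G o -> T *m Y o = sgb (f o) *: Y o) ->
  forall g, in_group L g -> exists f, linf f /\ forall o, G o -> g *m Y o = sgb (f o) *: Y o.
Proof.
move=> hT; apply: (@ig_ind n L (fun g => exists f, linf f /\ forall o, G o -> g *m Y o = sgb (f o) *: Y o)).
  by exists (fun _ => false); split => // o _; rewrite mul1mx scale1r.
move=> x h hx _ [fh [lh hh]]; have [fx [lx hx']] := hT x hx.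
exists (fun o => fx o (+) fh o); split.
  by move=> o o'; rewrite lx lh addbACA.
by move=> o Go; rewrite -mulmxA hh // -scalemxAr hx' // scalerA sgb_add mulrC.
Qed.

Lemma XA_herm n (A : opn n) : adj (XA A) = XA A.
Proof. by rewrite /XA adj_M adj_K. Qed.

Lemma XA_mul n (M A : opn n) : XA (M *m A) = M *m XA A *m adj M.
Proof. by rewrite /XA adj_M !mulmxA. Qed.

Lemma XA_eq0 n (A : opn n) : XA A = 0 -> A = 0.
Proof.
move=> h; apply/matrixP => i l; rewrite mxE.
move/matrixP: h => /(_ i i); rewrite !mxE => h.
have h2 : \sum_j `|A i j| ^+ 2 = 0.
  rewrite -[RHS]h; apply: eq_bigr => j _; rewrite /adj !mxE normCK.
  done.
have := @psumr_eq0P _ _ xpredT (fun j => `|A i j| ^+ 2) (fun j _ => exprn_ge0 2 (normr_ge0 (A i j))) h2 l.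
by move=> /(_ isT) /eqP; rewrite expf_eq0 /= normr_eq0 => /eqP.
Qed.

Lemma sign_right n (T Y : opn n) b : adj T = T -> adj Y = Y ->
  T *m Y = sgb b *: Y -> Y *m T = sgb b *: Y.
Proof.
move=> hT hY h.
by rewrite -[Y *m T]adj_K adj_M hT hY h adj_Z hY sgb_conj.
Qed.

Lemma tr_opp n (M : opn n) : \tr (- M) = - \tr M.
Proof. by rewrite -scaleN1r mxtraceZ mulN1r. Qed.

Lemma tr_anti n (T Y Q : opn n) c : T *m Y = c *: Y -> Y *m T = c *: Y -> c * c = 1 ->
  Q *m T = - (T *m Q) -> \tr (Q *m Y) = 0.
Proof.
move=> h1 h2 hc hQ.
have e : c * \tr (Q *m Y) = - (c * \tr (Q *m Y)).
  have e1 : c * \tr (Q *m Y) = \tr (T *m Q *m Y).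
    by rewrite -mxtraceZ scalemxAr -h2 mulmxA mxtrace_mulC mulmxA.
  have e2 : \tr (T *m Q *m Y) = - (c * \tr (Q *m Y)).
    by rewrite -[T *m Q]opprK -hQ mulNmx tr_opp -mulmxA h1 -scalemxAr mxtraceZ.
  by rewrite {1}e1 e2.
have : 2%:R * (c * \tr (Q *m Y)) = 0 by rewrite mulr2n mulrDl !mul1r {1}e addNr.
move/eqP; rewrite mulf_eq0 pnatr_eq0 /= mulf_eq0 => /orP [/eqP hc0|/eqP //].
by move: hc; rewrite hc0 mul0r => /eqP; rewrite eq_sym oner_eq0.
Qed.


Definition incl n (L : seq (opn n)) (Q : opn n) : Prop :=
  exists c g, in_group L g /\ Q = c *: g.

Definition Inv n (L : seq (opn n)) (A : (nat -> bool) -> opn n) : Prop :=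
  exists G, linG G /\ (forall o, ~ G o -> A o = 0) /\
  (forall T, T \in L -> exists f, linf f /\ forall o, G o -> T *m XA (A o) = sgb (f o) *: XA (A o)) /\
  (forall o, G o -> \tr (XA (A o)) != 0 /\
     forall Q, is_pauli Q -> ~ incl L Q -> \tr (Q *m XA (A o)) = 0).

Lemma ig_comm2 n (L : seq (opn n)) g h : LP L -> in_group L g -> in_group L h -> g *m h = h *m g.
Proof.
move=> hL hg; move: h; apply: (@ig_ind n L (fun h => g *m h = h *m g)).
  by rewrite mul1mx mulmx1.
by move=> x h hx _ IH; rewrite mulmxA (ig_comm hL hx hg) -!mulmxA IH.
Qed.

Lemma inv_gate n (L : seq (opn n)) A U : clifford U -> LP L -> Inv L A ->
  LP [seq U *m T *m invmx U | T <- L] /\ Inv [seq U *m T *m invmx U | T <- L] (fun o => U *m A o).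
Proof.
move=> hC hL [G [lG [h0 [hi hiii]]]].
have [hU hCl] := hC.
have hu := unitary_unit hU.
have hadjV : adj (invmx U) = U by rewrite unitary_inv // adj_K.
have hadjU : adj U = invmx U by rewrite unitary_inv.
have hUV : U *m invmx U = 1%:M by rewrite mulmxV.
have hVU : invmx U *m U = 1%:M by rewrite mulVmx.
have key : forall M Y, U *m M *m invmx U *m (U *m Y *m invmx U) = U *m (M *m Y) *m invmx U.
  by move=> M Y; rewrite !mulmxA mulmxKV // !mulmxA.
have hXA : forall o, XA (U *m A o) = U *m XA (A o) *m invmx U by move=> o; rewrite XA_mul hadjU.
split.
  split.
    move=> T' /mapP [T hT ->]; have [hp [ha hs]] := proj1 hL T hT.
    split; first by apply: hCl.
    split; first by rewrite !adj_M hadjV ha hadjU mulmxA.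
    by rewrite !mulmxA mulmxKV // -(mulmxA U T T) hs mulmx1.
  move=> T1 T2 /mapP [T hT ->] /mapP [T' hT' ->].
  rewrite -!mulmxA !mulmxA !mulmxKV //; rewrite -!mulmxA; congr (_ *m _).
  by rewrite !mulmxA (proj2 hL _ _ hT hT').
exists G; split => //; split; first by move=> o hG; rewrite h0 // mulmx0.
split.
  move=> T' /mapP [T hT ->]; have [f [lf hf]] := hi T hT.
  exists f; split => // o hG; rewrite hXA.
  by rewrite key hf // -scalemxAr -scalemxAl.
move=> o hG; have [htr hQ] := hiii o hG; split.
  by rewrite hXA mxtrace_mulC mulmxA hVU mul1mx.
move=> Q hpQ hnQ; rewrite hXA.
rewrite mulmxA mxtrace_mulC !mulmxA -[_ *m A o *m adj (A o)]mulmxA.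
apply: hQ; first exact: clifford_inv.
case=> c [g [hg he]]; apply: hnQ; exists c, (U *m g *m invmx U); split.
  exact: ig_conj.
have -> : Q = U *m (invmx U *m Q *m U) *m invmx U.
  by rewrite !mulmxA mulmxV // mul1mx mulmxK.
by rewrite he -scalemxAr -scalemxAl.
Qed.

Lemma proj_sign n b a (S Y : opn n) : S *m Y = sgb a *: Y ->
  proj b S *m Y = if b == a then Y else 0.
Proof.
move=> h; rewrite projE -scalemxAl mulmxDl mul1mx -scalemxAl h scalerA.
case: (b =P a) => [->|hne]; first by rewrite sgb_sq scale1r scale_half_double.
have -> : sgb b * sgb a = -1.
  by clear h; move: hne; case: a; case: b => //= _; rewrite ?mulrN ?mulr1 ?mul1r.
by rewrite scaleN1r subrr scaler0.
Qed.

Lemma linf0 f : linf f -> f (fun _ => false) = false.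
Proof. by move=> lf; have := lf (fun _ => false) (fun _ => false); rewrite /= => ->; rewrite addbb. Qed.

Lemma inv_meas_a n (L : seq (opn n)) A (S : opn n) j : LP L -> in_group L S -> Inv L A ->
  Inv L (fun o => proj (o j) S *m A o).
Proof.
move=> hL hS [G [[lG0 lG] [h0 [hi hiii]]]].
have hSa : adj S = S := ig_herm hL hS.
have [f [lf hf]] := ig_sign hi hS.
have hX : forall o, G o -> XA (proj (o j) S *m A o) = if o j == f o then XA (A o) else 0.
  move=> o hG; rewrite XA_mul proj_adj // (proj_sign _ (hf o hG)).
  case: (o j =P f o) => [he|_]; last by rewrite !mul0mx.
  have := sign_right (proj_adj (o j) hSa) (XA_herm (A o)).
  move=> /(_ false); rewrite /= scale1r; apply.
  by rewrite (proj_sign _ (hf o hG)) he eqxx.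
exists (fun o => G o /\ o j = f o); split.
  split; first by split => //; rewrite linf0.
  by move=> o o' [hG e] [hG' e']; split; [exact: lG | rewrite lf e e'].
split.
  move=> o hn; case: (classic (G o)) => hG; last by rewrite h0 // mulmx0.
  apply: XA_eq0; rewrite hX //; case: eqP => // e; by exfalso; apply: hn.
split.
  move=> T hT; have [fT [lT hT']] := hi T hT; exists fT; split => // o [hG e].
  by rewrite hX // e eqxx; apply: hT'.
by move=> o [hG e]; rewrite hX // e eqxx; apply: hiii.
Qed.

Lemma comm_of_scaled n (Q g S : opn n) c : is_pauli Q -> Q = c *: g ->
  Q *m S = S *m Q -> g *m S = S *m g.
Proof.
move=> hp he hc.
have c0 : c != 0.
  by apply/eqP => c0; move: (pauli_neq0 hp); rewrite he c0 scale0r eqxx.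
apply: (scalerI c0); rewrite scalemxAl scalemxAr -he; exact: hc.
Qed.

Lemma inv_meas_b_gen n (L L' : seq (opn n)) A (S : opn n) j :
  LP L -> is_pauli S -> adj S = S ->
  (forall Y, Y \in L' -> Y = S \/ (in_group L Y /\ Y *m S = S *m Y)) ->
  S \in L' ->
  (forall g, in_group L g -> g *m S = S *m g -> in_group L' g) ->
  ((exists T, T \in L /\ S *m T = - (T *m S)) \/ ~ incl L S) ->
  Inv L A -> LP L' /\ Inv L' (fun o => proj (o j) S *m A o).
Proof.
move=> hL hpS hSa hY hSL' hG4 hS0 [G [lG [h0 [hi hiii]]]].
have hSS : S *m S = 1%:M := hpauli_sq hpS hSa.
have hX : forall o, XA (proj (o j) S *m A o) = proj (o j) S *m XA (A o) *m proj (o j) S.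
  by move=> o; rewrite XA_mul proj_adj.
split.
  split.
    move=> Y /hY [->|[hg hc]]; first by [].
    by split; [exact: ig_pauli hg | split; [exact: ig_herm hg | exact: ig_sq hg]].
  move=> Y Y' /hY [->|[hg hc]] /hY [->|[hg' hc']] //.
  exact: (ig_comm2 hL hg hg').
exists G; split => //; split; first by move=> o hn; rewrite h0 // mulmx0.
split.
  move=> Y /hY [->|[hg hc]].
    exists (fun o => o j); split; first by [].
    by move=> o _; rewrite hX; move: (XA (A o)) => X; rewrite !mulmxA S_proj // -!scalemxAl.
  have [f [lf hf]] := ig_sign hi hg; exists f; split => // o hG.
  rewrite hX; move: (XA (A o)) (hf o hG) => X hX'.
  rewrite !mulmxA (proj_comm (o j) hc) -(mulmxA _ Y) hX'.
by move: (proj (o j) S) => P; rewrite -scalemxAr -scalemxAl.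
move=> o hG; have [htr hQ] := hiii o hG.
have htrS : \tr (S *m XA (A o)) = 0.
  case: hS0 => [[T [hT hST]]|hn]; last by apply: hQ.
  have [f [_ hf]] := hi T hT.
  have hTa := proj1 (proj2 (proj1 hL T hT)).
  apply: (@tr_anti n T (XA (A o)) S (sgb (f o))) => //; first exact: hf.
    exact: (sign_right hTa (XA_herm _) (hf o hG)).
  exact: sgb_sq.
rewrite hX; move: (XA (A o)) htr hQ htrS => X htr hQ htrS.
split.
  rewrite mxtrace_mulC mulmxA proj_idem // tr_proj htrS mulr0 addr0.
  by apply: mulf_neq0 => //; rewrite invr_eq0 pnatr_eq0.
move=> Q hpQ hnQ.
rewrite !mulmxA mxtrace_mulC !mulmxA.
case: (pauli_comm hpQ hpS) => hc; last first.
  by rewrite (proj_anti _ hc) -(mulmxA Q) proj_orth // mulmx0 mul0mx mxtrace0.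
rewrite -(mulmxA _ Q) (proj_comm (o j) hc) mulmxA proj_idem // -mulmxA tr_proj.
have h1 : \tr (Q *m X) = 0.
  apply: hQ => // -[c [g [hg he]]]; apply: hnQ; exists c, g; split => //.
  by apply: hG4 => //; apply: (comm_of_scaled hpQ he hc).
have h2 : \tr (S *m (Q *m X)) = 0.
  rewrite mulmxA -hc; apply: hQ; first exact: pauli_mul.
  move=> [c [g [hg he]]]; apply: hnQ.
  have hcQS : (Q *m S) *m S = S *m (Q *m S) by rewrite mulmxA -hc.
  have hgS := comm_of_scaled (pauli_mul hpQ hpS) he hcQS.
  exists c, (g *m S); split; first by apply: igM; [exact: hG4 | exact: igT].
  by rewrite scalemxAl -he -mulmxA hSS mulmx1.
by rewrite h1 h2 mulr0 addr0 mulr0.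
Qed.

Lemma ig_commS n (L : seq (opn n)) (S : opn n) :
  (forall y, y \in L -> y *m S = S *m y) -> forall g, in_group L g -> g *m S = S *m g.
Proof.
move=> h; apply: (@ig_ind n L (fun g => g *m S = S *m g)); first by rewrite mul1mx mulmx1.
by move=> x g hx _ IH; rewrite -mulmxA IH !mulmxA h.
Qed.

Lemma neg_self_eq0 n (M : opn n) : M = - M -> M = 0.
Proof. by move=> h; rewrite -(scale_half_double M) {2}h subrr scaler0. Qed.

Lemma G4 n (L L0 : seq (opn n)) T1 S : LP L -> T1 \in L -> T1 *m S = -(S *m T1) ->
  S *m S = 1%:M ->
  (forall x, x \in L -> x = T1 \/ exists y, y \in L0 /\ (x = y \/ x = T1 *m y)) ->
  (forall y, y \in L0 -> y *m S = S *m y /\ y *m T1 = T1 *m y) ->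
  forall g, in_group L g -> g *m S = S *m g -> in_group L0 g.
Proof.
move=> hL hT1 hT1S hSS hdec hL0 g hg hgS.
have hT1sq : T1 *m T1 = 1%:M := proj2 (proj2 (proj1 hL T1 hT1)).
have claim : forall g, in_group L g -> exists k : bool, exists h, in_group L0 h /\
    g = (if k then T1 else 1%:M) *m h.
  apply: (@ig_ind n L (fun g => exists k : bool, exists h, in_group L0 h /\ g = (if k then T1 else 1%:M) *m h)).
    by exists false, 1%:M; split; [exact: ig1 | rewrite mul1mx].
  move=> x h' hx _ [k [h [hh ->]]].
  have hK : forall y, y \in L0 -> y *m (if k then T1 else 1%:M) = (if k then T1 else 1%:M) *m y.
    by move=> y hy; case: k; rewrite ?mulmx1 ?mul1mx //; exact: (proj2 (hL0 y hy)).
  have hT1K : forall M : opn n, T1 *m ((if k then T1 else 1%:M) *m M) = (if ~~ k then T1 else 1%:M) *m M.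
    by clear hK => M; case: k; rewrite /= ?mul1mx // mulmxA hT1sq mul1mx.
  case: (hdec x hx) => [->|[y [hy [->|->]]]].
  - by exists (~~ k), h.
  - exists k, (y *m h); split; first by apply: igM => //; exact: igT.
    by rewrite mulmxA (hK y hy) -mulmxA.
  - exists (~~ k), (y *m h); split; first by apply: igM => //; exact: igT.
    by rewrite -mulmxA [y *m (_ *m h)]mulmxA (hK y hy) -mulmxA hT1K.
have [k [h [hh he]]] := claim g hg.
have hhS : h *m S = S *m h := ig_commS (fun y hy => proj1 (hL0 y hy)) hh.
case: k he => he; last by rewrite he mul1mx.
exfalso.
have e : S *m (T1 *m h) = - (S *m (T1 *m h)).
  have H : (T1 *m h) *m S = S *m (T1 *m h) by rewrite /= in he; rewrite -he.
  rewrite -{1}H -mulmxA hhS mulmxA hT1S mulNmx.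
  by rewrite mulmxA.
have e0 := neg_self_eq0 e.
have : g = 0 by rewrite he -[T1 *m h]mul1mx -hSS -mulmxA e0 mulmx0.
move=> g0; move: (ig_sq hL hg); rewrite g0 mul0mx => /esym/eqP.
by rewrite (negbTE (one_neq0 n)).
Qed.

Lemma comm_of_nanti n (Y S : opn n) : is_pauli Y -> is_pauli S -> ~~ anticomm Y S ->
  Y *m S = S *m Y.
Proof. by move=> hY hS hn; case: (pauli_comm hY hS) => // h; move: hn; rewrite /anticomm h eqxx. Qed.

Lemma not_incl_S n (L : seq (opn n)) (S : opn n) : LP L -> is_pauli S -> adj S = S ->
  ~ in_group L S -> ~ in_group L (-S) -> ~ incl L S.
Proof.
move=> hL hpS hSa h1 h2 [c [g [hg he]]].
have hSS := hpauli_sq hpS hSa.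
have hgg := ig_sq hL hg.
have hc : c * c = 1.
  move: hSS; rewrite he -scalemxAl -scalemxAr hgg scalerA => /eqP.
  rewrite -subr_eq0 -{2}(scale1r 1%:M) -scalerBl scaler_eq0 (negbTE (one_neq0 n)) orbF subr_eq0.
  by move/eqP.
have : c ^+ 2 == 1 by rewrite expr2 hc.
rewrite sqrf_eq1 => /orP [/eqP c1|/eqP c1].
  by apply: h1; rewrite he c1 scale1r.
by apply: h2; rewrite he c1 scaleN1r opprK.
Qed.

Lemma inv_meas_b n (L : seq (opn n)) A (S : opn n) j : LP L -> is_pauli S -> adj S = S ->
  ~ in_group L S -> ~ in_group L (-S) -> Inv L A ->
  LP (update_b L S) /\ Inv (update_b L S) (fun o => proj (o j) S *m A o).
Proof.
move=> hL hpS hSa hn1 hn2 hI.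
have hSS := hpauli_sq hpS hSa.
have hpL : forall T, T \in L -> is_pauli T := fun T hT => proj1 (proj1 hL T hT).
rewrite /update_b; set i := find _ L.
case: ifP => hi; last first.
  apply: (inv_meas_b_gen j hL hpS hSa) => //.
  - move=> Y; rewrite mem_rcons in_cons => /orP [/eqP ->|hY]; first by left.
    right; split; first exact: igT.
    apply: comm_of_nanti => //; first exact: hpL.
    apply/negP => ha; move: hi; rewrite /i -has_find => /negbT /hasPn /(_ Y hY).
    by rewrite ha.
  - by rewrite mem_rcons mem_head.
  - move=> g hg _; apply: ig_sub hg => x hx; by rewrite mem_rcons in_cons hx orbT.
  - by right; apply: not_incl_S.
have hhas : has (fun T => anticomm T S) L by rewrite has_find.
set T1 := nth 0 L i.
have hT1a : anticomm T1 S := nth_find 0 hhas.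
have hT1L : T1 \in L := mem_nth 0 hi.
have hT1S : T1 *m S = - (S *m T1) by apply/eqP.
have hsplit : forall x, x \in L -> x = T1 \/ x \in take i L ++ drop i.+1 L.
  move=> x; rewrite -{1}(cat_take_drop i L) (drop_nth 0 hi) mem_cat in_cons.
  case/orP => [h|/orP [/eqP ->|h]]; [right | left | right] => //; rewrite mem_cat ?h ?orbT //.
have hsubL : {subset take i L ++ drop i.+1 L <= L}.
  by move=> x; rewrite mem_cat => /orP [/mem_take|/mem_drop].
have hcT1 : forall x, x \in L -> x *m T1 = T1 *m x := fun x hx => proj2 hL x T1 hx hT1L.
have hT1sq : T1 *m T1 = 1%:M := proj2 (proj2 (proj1 hL T1 hT1L)).
set L0 := [seq (if anticomm T' S then T1 *m T' else T') | T' <- take i L ++ drop i.+1 L].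
have hL0 : forall y, y \in L0 -> in_group L y /\ y *m S = S *m y /\ y *m T1 = T1 *m y.
  move=> y /mapP [x hx ->]; have hxL := hsubL x hx.
  case: ifP => ha.
    split; first by apply: igM; apply: igT.
    have hxS : x *m S = - (S *m x) by apply/eqP.
    split; first by rewrite -mulmxA hxS mulmxN [T1 *m (S *m x)]mulmxA hT1S mulNmx opprK mulmxA.
    by rewrite -mulmxA hcT1.
  split; first exact: igT.
  split; last exact: hcT1.
  by apply: comm_of_nanti => //; [exact: hpL | rewrite ha].
apply: (inv_meas_b_gen j hL hpS hSa) => //.
- move=> Y; rewrite mem_cat mem_seq1 => /orP [hY|/eqP ->]; last by left.
  by right; have [h1 [h2 _]] := hL0 Y hY.
- by rewrite mem_cat mem_seq1 eqxx orbT.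
- move=> g hg hgS; apply: (@ig_sub n L0); first by move=> x hx; rewrite mem_cat hx.
  apply: (G4 hL hT1L hT1S hSS _ _ hg hgS).
    move=> x hx; case: (hsplit x hx) => [->|hx']; first by left.
    right; case: (boolP (anticomm x S)) => ha.
      exists (T1 *m x); split; first by apply/mapP; exists x => //; rewrite ha.
      by right; rewrite mulmxA hT1sq mul1mx.
    exists x; split; last by left.
    by apply/mapP; exists x => //; rewrite (negbTE ha).
  by move=> y hy; have [_ h] := hL0 y hy.
- left; exists T1; split => //.
  by rewrite -[S *m T1]opprK -hT1S.
Qed.

Fixpoint krs n (C : circuit n) (j : nat) (o : nat -> bool) : opn n :=
  match C with
  | [::] => 1%:M
  | Gate U :: C' => krs C' j o *m U
  | Meas Sm :: C' => krs C' j.+1 o *m proj (o j) Sm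
  end.

Lemma run_krs n (C : circuit n) j o psi : run C j o psi = krs C j o *m psi.
Proof.
elim: C j psi => [|c C IH] j psi /=; first by rewrite mul1mx.
by case: c => [U|Sm]; rewrite IH mulmxA.
Qed.

Lemma decPE (P : Prop) : Defs.decP P = true <-> P.
Proof.
rewrite /Defs.decP; case: (ClassicalEpsilon.excluded_middle_informative P) => h; split => // h'.
Qed.

Lemma main_ind n (C : circuit n) : valid_circuit C -> forall L j A, LP L -> Inv L A ->
  exists G, linG G /\ forall o,
    (G o -> krs (flip_meas (oca_flags L C) C) j o *m A o != 0) /\
    (~ G o -> krs (flip_meas (oca_flags L C) C) j o *m A o = 0).
Proof.
elim: C => [|c C IH] /=.
  move=> _ L j A hL [G [lG [h0 [_ hiii]]]]; exists G; split => // o; rewrite mul1mx; split.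
    move=> hG; apply/eqP => hA; have := proj1 (hiii o hG).
    by rewrite /XA hA mul0mx mxtrace0 eqxx.
  exact: h0.
case: c => [U|Sm] [hv hC] L j A hL hI.
  have [hL' hI'] := inv_gate hv hL hI.
  have [G [lG hG]] := IH hC _ j _ hL' hI'.
  by exists G; split => // o /=; rewrite -mulmxA; exact: hG o.
set S := Sm.
have [hpS hSa] := hv.
case E: (Defs.decP (in_group L S \/ in_group L (- S))) => /=.
  move/decPE: E => E.
  set S2 := if Defs.decP (in_group L (- S)) then - S else S.
  have hS2 : in_group L S2.
    rewrite /S2; case E2: (Defs.decP (in_group L (- S))); first by move/decPE: E2.
    case: E => // h; exfalso; move/decPE: h; rewrite E2.
    done.
  have hI' := inv_meas_a j hL hS2 hI.
  have [G [lG hG]] := IH hC _ j.+1 _ hL hI'.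
  by exists G; split => // o; rewrite -mulmxA; exact: hG o.
have hn : ~ (in_group L S \/ in_group L (- S)) by move=> h; move/decPE: h; rewrite E.
have [hL' hI'] := inv_meas_b j hL hpS hSa (fun h => hn (or_introl h)) (fun h => hn (or_intror h)) hI.
have [G [lG hG]] := IH hC _ j.+1 _ hL' hI'.
by exists G; split => // o; rewrite -mulmxA; exact: hG o.
Qed.


Lemma F2c (c : 'F_2) : c = 0 \/ c = 1.
Proof. case: c => [[|[|k]] hc]; [left|right|]; try by apply: val_inj. by []. Qed.

Lemma F2add (x y : 'F_2) : (x + y == 1) = (x == 1) (+) (y == 1).
Proof. by case: (F2c x) => ->; case: (F2c y) => ->. Qed.

Lemma of0 m : outcome_fun (0 : 'rV['F_2]_m) = fun _ => false.
Proof.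
apply: functional_extensionality => j; rewrite /outcome_fun.
by case: ltnP => h //; rewrite mxE.
Qed.

Lemma ofD m (a b : 'rV['F_2]_m) :
  outcome_fun (a + b) = fun j => outcome_fun a j (+) outcome_fun b j.
Proof.
apply: functional_extensionality => j; rewrite /outcome_fun.
by case: ltnP => h //; rewrite mxE F2add.
Qed.

Lemma LP_nil n : LP ([::] : seq (opn n)).
Proof. by split. Qed.

Lemma Inv_base n : Inv ([::] : seq (opn n)) (fun _ => 1%:M).
Proof.
exists (fun _ => True); split; first by split.
split; first by move=> o [].
split; first by [].
move=> o _; rewrite /XA adj_1 mulmx1; split.
  by rewrite mxtrace1 pnatr_eq0 expn_eq0.
move=> Q hp hn; rewrite mulmx1.
case: (eqVneq (\tr Q) 0) => // h; exfalso; apply: hn.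
have [c ->] := pauli_tr hp h; exists c, 1%:M; split => //; exact: ig1.
Qed.

Lemma sqnorm_eq0 N (v : 'cV[algC]_N) : sqnorm v = 0 -> v = 0.
Proof.
move=> h; apply/matrixP => i k; rewrite mxE (ord1 k).
have := @psumr_eq0P _ _ xpredT (fun i => `|v i 0| ^+ 2) (fun j _ => exprn_ge0 2 (normr_ge0 (v j 0))) h i isT.
by move/eqP; rewrite expf_eq0 /= normr_eq0 => /eqP.
Qed.

Lemma sqnorm0 N : sqnorm (0 : 'cV[algC]_N) = 0.
Proof. by rewrite /sqnorm big1 // => i _; rewrite mxE normr0 expr0n. Qed.

Lemma nonzero_witness n (K : opn n) : K != 0 ->
  exists psi : 'cV[algC]_(2 ^ n), sqnorm psi = 1 /\ sqnorm (K *m psi) != 0.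
Proof.
move=> hK.
have [i0 [j0 hij]] : exists i j, K i j != 0.
  apply: NNPP => hne; move/eqP: hK; apply; apply/matrixP => i j; rewrite mxE.
  by apply/eqP; apply: contraT => hn; exfalso; apply: hne; exists i, j.
exists (delta_mx j0 0); split.
  rewrite /sqnorm (bigD1 j0) //= mxE !eqxx normr1 expr1n big1 ?addr0 // => i hi.
  by rewrite mxE (negbTE hi) normr0 expr0n.
rewrite -colE; apply/eqP => h.
have := @psumr_eq0P _ _ xpredT (fun i => `|col j0 K i 0| ^+ 2) (fun j _ => exprn_ge0 2 (normr_ge0 _)) h i0 isT.
by move/eqP; rewrite expf_eq0 /= normr_eq0 mxE (negbTE hij).
Qed.

Theorem mainTheorem2 (n : nat) (C : circuit n) :
  valid_circuit C ->
  exists U : {vspace 'rV['F_2]_(num_meas (flipped_circuit C))},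
    forall o : 'rV['F_2]_(num_meas (flipped_circuit C)),
      (o \in U) <-> outcome_code (flipped_circuit C) o.
Proof.
move=> hv.
have [G [[lG0 lG] hG]] := main_ind hv 0 (@LP_nil n) (@Inv_base n).
set m := num_meas (flipped_circuit C).
have key : forall o : 'rV['F_2]_m, outcome_code (flipped_circuit C) o <-> G (outcome_fun o).
  move=> o; rewrite /outcome_code; split.
    move/decPE => [psi [hn hp]]; apply: NNPP => hnG.
    have h0 := proj2 (hG (outcome_fun o)) hnG; rewrite mulmx1 in h0.
    move: hp; rewrite /prob run_krs /flipped_circuit h0 mul0mx sqnorm0 eqxx.
    done.
  move=> hGo; apply/decPE.
  have := proj1 (hG (outcome_fun o)) hGo; rewrite mulmx1 => hK.
  have [psi [h1 h2]] := nonzero_witness hK.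
  by exists psi; split => //; rewrite /prob run_krs.
pose Z := [pred o : 'rV['F_2]_m | Defs.decP (G (outcome_fun o))].
exists <<enum Z>>%VS => o; rewrite key; split; last first.
  by move=> hGo; apply: memv_span; rewrite mem_enum inE; apply/decPE.
move=> ho; rewrite (coord_span (X := in_tuple (enum Z)) ho).
apply: (big_ind (fun v : 'rV['F_2]_m => G (outcome_fun v))).
- by rewrite of0.
- by move=> x y hx hy; rewrite ofD; apply: lG.
- move=> i _; case: (F2c (coord (in_tuple (enum Z)) i o)) => ->.
    by rewrite scale0r of0.
  rewrite scale1r.
  have : (in_tuple (enum Z))`_i \in enum Z by apply: mem_nth; exact: ltn_ord.
  by rewrite mem_enum inE => /decPE.
Qed.
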